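(* Let $\mathcal X=\{X_1,\dots,X_n\}$ be a multi-set of real symmetric $2\times2$ matrices and $S=\lim_{m\to\infty}\frac1m\log\sum_{i=1}^n\exp(mX_i)$ its log-exp-supremum. Then $S$ is an upper bound of $\mathcal X$ in the Loewner order, i.e. $X_j\le_{\mathrm L}S$ for all $j\in\{1,\dots,n\}$.
   Context: For real symmetric matrices $A,B$, $A\le_{\mathrm L}B$ (Loewner order) means that $B-A$ is positive semidefinite. $\exp$ and $\log$ denote the matrix exponential and matrix logarithm. *)

(* Defs.v *)
From HB Require Import structures.
From mathcomp Require Import all_boot all_order all_algebra.
From mathcomp Require Import all_classical all_reals all_analysis.
Set Implicit Arguments. Unset Strict Implicit. Unset Printing Implicit Defensive.
Import Order.TTheory GRing.Theory Num.Theory.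
Import numFieldNormedType.Exports.
Local Open Scope classical_set_scope.
Local Open Scope ring_scope.

Definition symmx (R : realType) (n : nat) (A : 'M[R]_n) : Prop := A^T = A.

Definition psdmx (R : realType) (n : nat) (A : 'M[R]_n) : Prop :=
  symmx A /\ forall v : 'rV[R]_n, 0 <= (v *m A *m v^T) 0 0.

Definition loewner_le (R : realType) (n : nat) (A B : 'M[R]_n) : Prop :=
  psdmx (B - A).

Definition mexp (R : realType) (n : nat) (A : 'M[R]_n.+1) : 'M[R]_n.+1 :=
  lim (series (fun k : nat => (k`!%:R)^-1 *: A ^+ k) @ \oo).

(* matrix logarithm (of a symmetric positive definite matrix): the unique
   real symmetric matrix L with exp L = M (chosen classically; defaults to 0
   when no such L exists). *)
Definition mlog (R : realType) (n : nat) (M : 'M[R]_n.+1) : 'M[R]_n.+1 :=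
  xget 0 [set L : 'M[R]_n.+1 | symmx L /\ mexp L = M].

(* Main.v *)
Require Import Defs.
From HB Require Import structures.
From mathcomp Require Import all_boot all_order all_algebra.
From mathcomp Require Import all_classical all_reals all_analysis.
From mathcomp Require Import ring lra.
Import Order.TTheory GRing.Theory Num.Theory.
Import numFieldNormedType.Exports.
Local Open Scope classical_set_scope.
Local Open Scope ring_scope.

Definition sp {R : realType} (l1 l2 : R) (u1 u2 : 'rV[R]_2) : 'M[R]_2 :=
  l1 *: (u1^T *m u1) + l2 *: (u2^T *m u2).
Definition ON {R : realType} (u1 u2 : 'rV[R]_2) : Prop :=
  [/\ u1 *m u1^T = 1, u2 *m u2^T = 1, u1 *m u2^T = 0 & u1^T *m u1 + u2^T *m u2 = 1].

Lemma PPE {R : realType} (u v w : 'rV[R]_2) :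
  (u^T *m v) *m (w^T *m w) = u^T *m (v *m w^T) *m w.
Proof. by rewrite !mulmxA. Qed.

Lemma ON_21 {R : realType} {u1 u2 : 'rV[R]_2} : ON u1 u2 -> u2 *m u1^T = 0.
Proof. by case=> _ _ h _; rewrite -[u2 *m _]trmxK trmx_mul trmxK h trmx0. Qed.

Lemma sp_mul {R : realType} (a1 a2 b1 b2 : R) u1 u2 : ON u1 u2 ->
  sp a1 a2 u1 u2 *m sp b1 b2 u1 u2 = sp (a1 * b1) (a2 * b2) u1 u2.
Proof.
move=> hON; have h21 := ON_21 hON; case: hON => h11 h22 h12 _.
rewrite /sp mulmxDl !mulmxDr -!scalemxAl -!scalemxAr !scalerA !PPE h11 h22 h12 h21.
by rewrite !mulmx0 !mul0mx !scaler0 addr0 add0r !mulmx1.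
Qed.

Lemma sp_add {R : realType} (a1 a2 b1 b2 : R) u1 u2 :
  sp a1 a2 u1 u2 + sp b1 b2 u1 u2 = sp (a1 + b1) (a2 + b2) u1 u2.
Proof. by rewrite /sp !scalerDl addrACA. Qed.

Lemma sp_scale {R : realType} (c a1 a2 : R) u1 u2 :
  c *: sp a1 a2 u1 u2 = sp (c * a1) (c * a2) u1 u2.
Proof. by rewrite /sp scalerDr !scalerA. Qed.

Lemma sp_one {R : realType} {u1 u2 : 'rV[R]_2} : ON u1 u2 -> sp 1 1 u1 u2 = 1.
Proof. by case=> _ _ _ h; rewrite /sp !scale1r. Qed.

Lemma sp_pow {R : realType} (a1 a2 : R) u1 u2 k : ON u1 u2 ->
  sp a1 a2 u1 u2 ^+ k = sp (a1 ^+ k) (a2 ^+ k) u1 u2.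
Proof.
move=> hON; elim: k => [|k IH]; first by rewrite !expr0 sp_one.
by rewrite exprS IH -mulmxE sp_mul // -!exprS.
Qed.

Lemma sp_tr {R : realType} (a1 a2 : R) u1 u2 : (sp a1 a2 u1 u2)^T = sp a1 a2 u1 u2.
Proof. by rewrite /sp linearD !linearZ /= !trmx_mul !trmxK. Qed.

Definition qf {R : realType} (v : 'rV[R]_2) (A : 'M[R]_2) : R := (v *m A *m v^T) 0 0.

Lemma qfD {R : realType} v (A B : 'M[R]_2) : qf v (A + B) = qf v A + qf v B.
Proof. by rewrite /qf mulmxDr mulmxDl mxE. Qed.
Lemma qfZ {R : realType} v c (A : 'M[R]_2) : qf v (c *: A) = c * qf v A.
Proof. by rewrite /qf -scalemxAr -scalemxAl mxE. Qed.
Lemma qfN {R : realType} v (A : 'M[R]_2) : qf v (- A) = - qf v A.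
Proof. by rewrite -scaleN1r qfZ mulN1r. Qed.
Lemma qfB {R : realType} v (A B : 'M[R]_2) : qf v (A - B) = qf v A - qf v B.
Proof. by rewrite qfD qfN. Qed.

Definition ip {R : realType} (v u : 'rV[R]_2) : R := (v *m u^T) 0 0.

Lemma w11 {R : realType} (w : 'M[R]_1) : (w *m w^T) 0 0 = w 0 0 ^+ 2.
Proof. by rewrite mxE big_ord1 mxE expr2. Qed.

Lemma qfP {R : realType} v (u : 'rV[R]_2) : qf v (u^T *m u) = ip v u ^+ 2.
Proof.
rewrite /qf /ip mulmxA -mulmxA.
have -> : u *m v^T = (v *m u^T)^T by rewrite trmx_mul trmxK.
exact: w11.
Qed.

Lemma qf_sp {R : realType} v (l1 l2 : R) u1 u2 :
  qf v (sp l1 l2 u1 u2) = l1 * ip v u1 ^+ 2 + l2 * ip v u2 ^+ 2.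
Proof. by rewrite /sp qfD !qfZ !qfP. Qed.

Lemma qf1 {R : realType} (v : 'rV[R]_2) u1 u2 : ON u1 u2 ->
  ip v u1 ^+ 2 + ip v u2 ^+ 2 = qf v 1.
Proof. by move=> h; rewrite -(sp_one h) qf_sp !mul1r. Qed.

Lemma sp_eig1 {R : realType} (l1 l2 : R) u1 u2 : ON u1 u2 ->
  u1 *m sp l1 l2 u1 u2 = l1 *: u1.
Proof.
move=> h; have h21 := ON_21 h; case: h => h11 h22 h12 _.
rewrite /sp mulmxDr -!scalemxAr !mulmxA h11 h12 mul0mx scaler0 addr0 mul1mx //.
Qed.

Lemma sp_eig2 {R : realType} (l1 l2 : R) u1 u2 : ON u1 u2 ->
  u2 *m sp l1 l2 u1 u2 = l2 *: u2.
Proof.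
move=> h; have h21 := ON_21 h; case: h => h11 h22 h12 _.
rewrite /sp mulmxDr -!scalemxAr !mulmxA h22 h21 mul0mx scaler0 add0r mul1mx //.
Qed.

Lemma sp_of_eig {R : realType} (A : 'M[R]_2) l1 l2 u1 u2 : ON u1 u2 ->
  u1 *m A = l1 *: u1 -> u2 *m A = l2 *: u2 -> A = sp l1 l2 u1 u2.
Proof.
case=> _ _ _ h e1 e2.
have -> : A = (u1^T *m u1 + u2^T *m u2) *m A by rewrite h mul1mx.
by rewrite mulmxDl -!mulmxA e1 e2 /sp -!scalemxAr.
Qed.

Lemma psd_sp {R : realType} (l1 l2 : R) u1 u2 : 0 <= l1 -> 0 <= l2 ->
  psdmx (sp l1 l2 u1 u2).
Proof.
move=> h1 h2; split; first exact: sp_tr.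
move=> v; have := qf_sp v l1 l2 u1 u2; rewrite /qf => ->.
by apply: addr_ge0; apply: mulr_ge0 => //; apply: sqr_ge0.
Qed.

Lemma psdD {R : realType} (A B : 'M[R]_2) : psdmx A -> psdmx B -> psdmx (A + B).
Proof.
move=> [hA qA] [hB qB]; split; first by rewrite /symmx linearD /= hA hB.
by move=> v; have := qfD v A B; rewrite /qf => ->; apply: addr_ge0.
Qed.

Lemma psd0 {R : realType} : psdmx (0 : 'M[R]_2).
Proof. split; first by rewrite /symmx trmx0. by move=> v; rewrite mulmx0 mul0mx mxE. Qed.

Definition rv2 {R : realType} (x y : R) : 'rV[R]_2 :=
  \row_(j < 2) (if j == ord0 then x else y).

Lemma sum2 {R : realType} (F : 'I_2 -> R) : \sum_(i < 2) F i = F 0 + F 1.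
Proof. rewrite big_ord_recl big_ord_recl big_ord0 addr0 /=. by congr (F _ + F _); apply/val_inj. Qed.

Lemma ON_rv2 {R : realType} (x y : R) : x ^+ 2 + y ^+ 2 = 1 ->
  ON (rv2 x y) (rv2 (- y) x).
Proof.
move=> h; split; apply/matrixP => i j; rewrite !mxE ?sum2 ?mxE.
all: rewrite ?big_ord1 ?mxE /=.
- by rewrite [i]ord1 [j]ord1 eqxx mulr1n -!expr2.
- by rewrite [i]ord1 [j]ord1 eqxx mulr1n -!expr2 sqrrN addrC.
- by ring.
- case: i => [[|[|i]] Hi]; case: j => [[|[|j]] Hj] //=; rewrite ?mulr1n ?mulr0n; nra.
Qed.

Lemma eig_rv2 {R : realType} (A : 'M[R]_2) (x y l : R) :
  x * A 0 0 + y * A 1 0 = l * x -> x * A 0 1 + y * A 1 1 = l * y ->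
  rv2 x y *m A = l *: rv2 x y.
Proof.
move=> e1 e2; apply/matrixP => i j; rewrite !mxE sum2 !mxE /=.
case: j => [[|[|j]] Hj] //=.
- by have -> : Ordinal Hj = 0 by apply/val_inj.
- by have -> : Ordinal Hj = 1 by apply/val_inj.
Qed.

Lemma spectral {R : realType} (A : 'M[R]_2) : symmx A ->
  exists l1 l2 u1 u2, ON u1 u2 /\ A = sp l1 l2 u1 u2.
Proof.
move=> hA.
have hb : A 1 0 = A 0 1 by rewrite -[in RHS]hA mxE.
suff [x [y [l [hxy [e1 e2]]]]] : exists x y l, x ^+ 2 + y ^+ 2 = 1 /\
    x * A 0 0 + y * A 0 1 = l * x /\ x * A 0 1 + y * A 1 1 = l * y.
  exists l, (A 0 0 + A 1 1 - l), (rv2 x y), (rv2 (- y) x).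
  have hON := ON_rv2 x y hxy; split => //.
  apply: sp_of_eig => //; apply: eig_rv2; rewrite ?hb //; nra.
set a := A 0 0; set b := A 0 1; set c := A 1 1.
have [b0|b0] := eqVneq b 0.
  exists 1, 0, a; rewrite b0; split; first by rewrite expr1n expr0n addr0.
  by split; ring.
set r := Num.sqrt (((a - c) / 2) ^+ 2 + b ^+ 2).
have hr : r ^+ 2 = ((a - c) / 2) ^+ 2 + b ^+ 2.
  by rewrite sqr_sqrtr // addr_ge0 // sqr_ge0.
set l := (a + c) / 2 + r.
set n := Num.sqrt (b ^+ 2 + (l - a) ^+ 2).
have hb2 : 0 < b ^+ 2 by rewrite exprn_even_gt0 //.
have hn2 : n ^+ 2 = b ^+ 2 + (l - a) ^+ 2.
  by rewrite sqr_sqrtr // addr_ge0 // sqr_ge0.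
have hn : 0 < n by rewrite sqrtr_gt0 ltr_wpDr // sqr_ge0.
have hn0 : n != 0 by rewrite gt_eqF.
exists (b / n), ((l - a) / n), l; split; last split.
- by rewrite !expr_div_n -mulrDl -hn2 divff // expf_neq0.
- by field.
- have char : b * b + (l - a) * c = l * (l - a).
    by rewrite /l; nra.
  transitivity ((b * b + (l - a) * c) / n); first by field.
  by rewrite char; field.
Qed.

Lemma sp_sum {R : realType} (r : seq nat) (F G : nat -> R) u1 u2 :
  \sum_(i <- r) sp (F i) (G i) u1 u2 = sp (\sum_(i <- r) F i) (\sum_(i <- r) G i) u1 u2.
Proof. by rewrite /sp big_split /= -!scaler_suml. Qed.

Lemma cvg_sp {R : realType} (s1 s2 : nat -> R) e1 e2 u1 u2 :
  s1 @ \oo --> e1 -> s2 @ \oo --> e2 ->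
  (fun n => sp (s1 n) (s2 n) u1 u2) @ \oo --> sp e1 e2 u1 u2.
Proof. by move=> h1 h2; apply: cvgD; apply: cvgZr_tmp. Qed.

Lemma mexp_sp {R : realType} (l1 l2 : R) u1 u2 : ON u1 u2 ->
  mexp (sp l1 l2 u1 u2) = sp (expR l1) (expR l2) u1 u2.
Proof.
move=> hON; rewrite /mexp; apply: cvg_lim => //.
have -> : series (fun k : nat => (k`!%:R)^-1 *: sp l1 l2 u1 u2 ^+ k) =
   (fun n => sp (series (exp_coeff l1) n) (series (exp_coeff l2) n) u1 u2).
  apply/funext => n; rewrite /series /= -sp_sum; apply: eq_bigr => k _.
  by rewrite sp_pow // sp_scale /exp_coeff ![_^-1 * _]mulrC.
apply: cvg_sp; exact: is_cvg_series_exp_coeff.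
Qed.

Lemma lim_e {R : realType} (x c : R) :
  (fun t : nat => c * expR (x * (2^-1) ^+ t)) @ \oo --> c.
Proof.
suff : (fun t : nat => c * expR (x * (2^-1) ^+ t)) @ \oo --> c * expR (x * 0).
  by rewrite mulr0 expR0 mulr1.
apply: cvgMl_tmp; apply: (continuous_cvg _ (@continuous_expR R _)).
apply: cvgMl_tmp; apply: cvg_expr.
by rewrite ger0_norm ?invr_ge0 ?ler0n // invf_lt1 // ltr1n.
Qed.

Lemma qf1E {R : realType} (z : 'rV[R]_2) : qf z 1 = (z *m z^T) 0 0.
Proof. by rewrite /qf mulmx1. Qed.

Lemma pd_sp {R : realType} (s1 s2 : R) u1 u2 z : ON u1 u2 -> 0 < s1 -> 0 < s2 ->
  z *m z^T = 1 -> 0 < qf z (sp s1 s2 u1 u2).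
Proof.
move=> hON h1 h2 hz; have := qf1 z u1 u2 hON; rewrite qf1E hz mxE /= => e.
rewrite qf_sp; move: e.
have ha := sqr_ge0 (ip z u1); have hb := sqr_ge0 (ip z u2).
move: ha hb; set a := ip z u1 ^+ 2; set b := ip z u2 ^+ 2 => ha hb e.
have [a0|a0] := eqVneq a 0.
  by rewrite a0 add0r in e; rewrite a0 e mulr0 add0r mulr1.
have : 0 < a by rewrite lt0r a0.
move=> hapos; have := mulr_gt0 h1 hapos; have := mulr_ge0 (ltW h2) hb; lra.
Qed.

Lemma sqrt_mono_aux {R : realType} (Y1 Y2 C : 'M[R]_2) z c :
  symmx C -> C = Y1 - Y2 -> z *m z^T = 1 -> z *m C = c *: z ->
  0 < qf z Y1 -> 0 < qf z Y2 -> 0 <= qf z (Y1 *m Y1 - Y2 *m Y2) -> 0 <= c.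
Proof.
move=> hC eC hz ez p1 p2.
have -> : Y1 *m Y1 - Y2 *m Y2 = Y1 *m C + C *m Y2.
  by rewrite eC mulmxBr mulmxBl addrA subrK.
have eCt : C *m z^T = c *: z^T by rewrite -hC -trmx_mul ez linearZ.
have q1 : qf z (Y1 *m C) = c * qf z Y1.
  by rewrite /qf mulmxA -[_ *m C *m _]mulmxA eCt -scalemxAr mxE.
have q2 : qf z (C *m Y2) = c * qf z Y2.
  by rewrite /qf mulmxA ez -!scalemxAl mxE.
rewrite qfD q1 q2 -mulrDr => h; nra.
Qed.

Lemma symmx_spB {R : realType} (a1 a2 b1 b2 : R) u1 u2 w1 w2 :
  symmx (sp a1 a2 u1 u2 - sp b1 b2 w1 w2).
Proof. by rewrite /symmx linearB /= !sp_tr. Qed.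

Lemma sqrt_mono {R : realType} (s1 s2 t1 t2 : R) u1 u2 w1 w2 :
  ON u1 u2 -> ON w1 w2 -> 0 < s1 -> 0 < s2 -> 0 < t1 -> 0 < t2 ->
  psdmx (sp (s1 ^+ 2) (s2 ^+ 2) u1 u2 - sp (t1 ^+ 2) (t2 ^+ 2) w1 w2) ->
  psdmx (sp s1 s2 u1 u2 - sp t1 t2 w1 w2).
Proof.
move=> hu hw hs1 hs2 ht1 ht2 [_ hq].
have hC := symmx_spB s1 s2 t1 t2 u1 u2 w1 w2.
have [c1 [c2 [z1 [z2 [hz eC]]]]] := spectral _ hC.
rewrite eC; apply: psd_sp.
- apply: (@sqrt_mono_aux R (sp s1 s2 u1 u2) (sp t1 t2 w1 w2) _ z1 c1 hC (erefl _)).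
  + by case: hz.
  + by rewrite eC sp_eig1.
  + by apply: pd_sp => //; case: hz.
  + by apply: pd_sp => //; case: hz.
  + by rewrite !sp_mul // -!expr2; apply: hq.
- apply: (@sqrt_mono_aux R (sp s1 s2 u1 u2) (sp t1 t2 w1 w2) _ z2 c2 hC (erefl _)).
  + by case: hz.
  + by rewrite eC sp_eig2.
  + by apply: pd_sp => //; case: hz.
  + by apply: pd_sp => //; case: hz.
  + by rewrite !sp_mul // -!expr2; apply: hq.
Qed.

Lemma expR_ub {R : realType} (a : R) : expR a <= 1 + a * expR a.
Proof.
have e := expR_gt0 a; have := expR_ge1Dx (- a); rewrite expRN => H.
have : (1 - a) * expR a <= 1.
  by rewrite -[X in _ <= X](mulVf (lt0r_neq0 e)) ler_pM2r.
lra.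
Qed.

Lemma eh {R : realType} (x : R) t :
  expR (x * (2^-1) ^+ t.+1) ^+ 2 = expR (x * (2^-1) ^+ t).
Proof. by rewrite expr2 -expRD exprS; congr expR; field. Qed.

Lemma log_mono {R : realType} (x1 x2 y1 y2 : R) u1 u2 w1 w2 :
  ON u1 u2 -> ON w1 w2 ->
  psdmx (sp (expR x1) (expR x2) u1 u2 - sp (expR y1) (expR y2) w1 w2) ->
  psdmx (sp x1 x2 u1 u2 - sp y1 y2 w1 w2).
Proof.
move=> hu hw h0.
pose h := fun t : nat => (2^-1 : R) ^+ t.
have claim : forall t, psdmx (sp (expR (x1 * h t)) (expR (x2 * h t)) u1 u2
    - sp (expR (y1 * h t)) (expR (y2 * h t)) w1 w2).
  elim => [|t IH]; first by rewrite /h expr0 !mulr1.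
  apply: sqrt_mono => //; try exact: expR_gt0.
  by rewrite /h !eh.
split; first exact: symmx_spB.
move=> v; change (0 <= qf v (sp x1 x2 u1 u2 - sp y1 y2 w1 w2)).
rewrite qfB !qf_sp.
have := qf1 v u1 u2 hu; have := qf1 v w1 w2 hw.
have hA1 := sqr_ge0 (ip v u1); have hA2 := sqr_ge0 (ip v u2).
have hB1 := sqr_ge0 (ip v w1); have hB2 := sqr_ge0 (ip v w2).
move: hA1 hA2 hB1 hB2.
set A1 := ip v u1 ^+ 2; set A2 := ip v u2 ^+ 2.
set B1 := ip v w1 ^+ 2; set B2 := ip v w2 ^+ 2 => hA1 hA2 hB1 hB2 eB eA.
have key : forall t, y1 * B1 + y2 * B2 <=
    x1 * A1 * expR (x1 * h t) + x2 * A2 * expR (x2 * h t).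
  move=> t; have [_ q] := claim t.
  have : 0 <= qf v (sp (expR (x1 * h t)) (expR (x2 * h t)) u1 u2
    - sp (expR (y1 * h t)) (expR (y2 * h t)) w1 w2) := q v.
  rewrite qfB !qf_sp -/A1 -/A2 -/B1 -/B2 => H.
  have hh : 0 < h t by rewrite /h exprn_gt0 // invr_gt0 ltr0n.
  have k1 := expR_ub (x1 * h t); have k2 := expR_ub (x2 * h t).
  have l1 := expR_ge1Dx (y1 * h t); have l2 := expR_ge1Dx (y2 * h t).
  have m1 : expR (x1 * h t) * A1 <= (1 + x1 * h t * expR (x1 * h t)) * A1.
    exact: ler_wpM2r.
  have m2 : expR (x2 * h t) * A2 <= (1 + x2 * h t * expR (x2 * h t)) * A2.
    exact: ler_wpM2r.
  have n1 : (1 + y1 * h t) * B1 <= expR (y1 * h t) * B1.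
    exact: ler_wpM2r.
  have n2 : (1 + y2 * h t) * B2 <= expR (y2 * h t) * B2.
    exact: ler_wpM2r.
  have : 0 <= h t * (x1 * A1 * expR (x1 * h t) + x2 * A2 * expR (x2 * h t)
     - (y1 * B1 + y2 * B2)) by nra.
  by rewrite pmulr_rge0 // subr_ge0.
rewrite subr_ge0.
have hc : (fun t => x1 * A1 * expR (x1 * h t) + x2 * A2 * expR (x2 * h t))
    @ \oo --> x1 * A1 + x2 * A2.
  by apply: cvgD; apply: lim_e.
apply: (cvgr_to_ge hc); apply: nearW => t; exact: key.
Qed.

Lemma step {R : realType} n (X : 'I_n -> 'M[R]_2) (c : R) j :
  (forall i, symmx (X i)) ->
  symmx (mlog (\sum_(i < n) mexp (c *: X i))) /\
  psdmx (mlog (\sum_(i < n) mexp (c *: X i)) - c *: X j).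
Proof.
move=> sX.
have sX' : forall i, symmx (c *: X i) by move=> i; rewrite /symmx linearZ /= sX.
have pE : forall i, psdmx (mexp (c *: X i)).
  move=> i; have [y1 [y2 [w1 [w2 [hw ei]]]]] := spectral _ (sX' i).
  by rewrite ei mexp_sp //; apply: psd_sp; apply: ltW; apply: expR_gt0.
set M := \sum_(i < n) mexp (c *: X i).
have [y1 [y2 [w1 [w2 [hw ej]]]]] := spectral _ (sX' j).
have hM : M = mexp (c *: X j) + \sum_(i < n | i != j) mexp (c *: X i).
  by rewrite /M (bigD1 j).
have pRest : psdmx (\sum_(i < n | i != j) mexp (c *: X i)).
  by apply: big_ind => //; [exact: psd0 | exact: psdD].
have pM : psdmx M by rewrite hM; apply: psdD.
have [mu1 [mu2 [z1 [z2 [hz eM]]]]] := spectral _ pM.1.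
have pos : forall z, z *m z^T = 1 -> 0 < qf z M.
  move=> z hzz; rewrite hM qfD ej mexp_sp //.
  have := pd_sp (expR y1) (expR y2) w1 w2 z hw (expR_gt0 _) (expR_gt0 _) hzz.
  have := pRest.2 z; rewrite -/(qf z _); lra.
have h21 := ON_21 hz; case: (hz) => h11 h22 h12 _.
have ip11 : ip z1 z1 = 1 by rewrite /ip h11 mxE.
have ip22 : ip z2 z2 = 1 by rewrite /ip h22 mxE.
have ip12 : ip z1 z2 = 0 by rewrite /ip h12 mxE.
have ip21 : ip z2 z1 = 0 by rewrite /ip h21 mxE.
have mu1p : 0 < mu1.
  by have := pos z1 h11; rewrite eM qf_sp ip11 ip12 expr1n expr0n mulr1 mulr0 addr0.
have mu2p : 0 < mu2.
  by have := pos z2 h22; rewrite eM qf_sp ip22 ip21 expr1n expr0n mulr1 mulr0 add0r.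
have ex : exists L, [set L : 'M[R]_2 | symmx L /\ mexp L = M] L.
  exists (sp (ln mu1) (ln mu2) z1 z2); split; first exact: sp_tr.
  by rewrite mexp_sp // !lnK ?posrE.
have [sL eL] : symmx (mlog M) /\ mexp (mlog M) = M := xgetPex 0 ex.
split => //.
have [x1 [x2 [u1 [u2 [hu eLs]]]]] := spectral _ sL.
rewrite eLs ej; apply: log_mono => //.
rewrite -(mexp_sp x1 x2 u1 u2 hu) -(mexp_sp y1 y2 w1 w2 hw) -eLs -ej eL.
by rewrite hM [mexp _ + _]addrC addrK.
Qed.

Lemma coord_cvg {R : realType} (F : nat -> 'M[R]_2) (S : 'M[R]_2) a b :
  F @ \oo --> S -> (fun m => F m a b) @ \oo --> S a b.
Proof. move=> h; have := continuous_cvg _ (@coord_continuous R 2 2 a b S) h. exact. Qed.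

Lemma qfE {R : realType} (v : 'rV[R]_2) A : qf v A =
  (v 0 0 * A 0 0 + v 0 1 * A 1 0) * v 0 0 + (v 0 0 * A 0 1 + v 0 1 * A 1 1) * v 0 1.
Proof. by rewrite /qf mxE sum2 !mxE !sum2. Qed.

Lemma qf_cvg {R : realType} (F : nat -> 'M[R]_2) (S : 'M[R]_2) v :
  F @ \oo --> S -> (fun m => qf v (F m)) @ \oo --> qf v S.
Proof.
move=> h; have -> : (fun m => qf v (F m)) = (fun m =>
  (v 0 0 * F m 0 0 + v 0 1 * F m 1 0) * v 0 0 + (v 0 0 * F m 0 1 + v 0 1 * F m 1 1) * v 0 1).
  by apply/funext => m; rewrite qfE.
rewrite qfE; apply: cvgD; apply: cvgMr_tmp; apply: cvgD; apply: cvgMl_tmp;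
  exact: coord_cvg.
Qed.

Theorem lemma6 (R : realType) (n : nat) (X : 'I_n -> 'M[R]_2) (S : 'M[R]_2) :
  (forall i, symmx (X i)) ->
  (fun m : nat => (m%:R)^-1 *: mlog (\sum_(i < n) mexp (m%:R *: X i))) @ \oo --> S ->
  forall j : 'I_n, loewner_le (X j) S.
Proof.
move=> sX hS j.
set f := fun m : nat => (m%:R)^-1 *: mlog (\sum_(i < n) mexp (m%:R *: X i)) in hS.
have fsym : forall m, symmx (f m).
  by move=> m; rewrite /symmx /f linearZ /= (step n X (m%:R) j sX).1.
have Ssym : forall a b, S a b = S b a.
  move=> a b; have h1 := coord_cvg f S a b hS; have h2 := coord_cvg f S b a hS.
  have e : (fun m => f m a b) = (fun m => f m b a).
    apply/funext => m /=; have H := fsym m; rewrite /symmx in H; by rewrite -{1}H mxE.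
  rewrite e in h1; exact: (cvg_unique _ h1 h2).
split.
  apply/matrixP => a b; rewrite !mxE (Ssym a b); congr (_ - _).
  by have := congr1 (fun M : 'M[R]_2 => M a b) (sX j : (X j)^T = X j); rewrite /= mxE.
move=> v; change (0 <= qf v (S - X j)).
have hc : (fun m => f m - X j) @ \oo --> S - X j by apply: cvgD => //; exact: cvg_cst.
apply: (cvgr_to_ge (qf_cvg _ _ v hc)).
exists 1%N => // m /= hm.
have [_ [_ q]] := step n X (m%:R) j sX.
have hm0 : (m%:R : R) != 0 by rewrite pnatr_eq0 -lt0n.
have -> : f m - X j = (m%:R)^-1 *: (mlog (\sum_(i < n) mexp (m%:R *: X i)) - m%:R *: X j).
  by rewrite /f scalerBr scalerA mulVf // scale1r.
rewrite qfZ; apply: mulr_ge0; first by rewrite invr_ge0 ler0n.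
exact: q.
Qed.
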